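(* For every $k\ge1$ one has the following equalities of row vectors (of length $k+1$) of power series in $t$: $$\Big(\sum_{n\ge0}\#_{\mathcal B}\{(0,0)\xrightarrow{n}(k-i,i)\}t^n\Big)_{0\le i\le k}=t^k\,B_2F_2B_3F_3\cdots B_{k+1}F_{k+1},$$ $$\Big(\sum_{n\ge0}\#_{\mathcal D}\{(0,0)\xrightarrow{n}(k-i,i)\}t^n\Big)_{0\le i\le k}=t^k\,D_2F_2D_3F_3\cdots D_{k+1}F_{k+1}.$$
   Context: Let $\mathbb N=\{0,1,2,\dots\}$, $\mathcal B=\{(-1,1),(0,1),(1,0),(1,-1)\}$, $\mathcal D=\{(-1,1),(0,1),(1,-1)\}$. For a step set $\mathcal S$, $\#_{\mathcal S}\{(0,0)\xrightarrow{n}(i,j)\}$ is the number of sequences $p_0=(0,0),p_1,\dots,p_n=(i,j)$ of points of $\mathbb N^2$ with $p_m-p_{m-1}\in\mathcal S$. For $n\ge2$, $F_n\in\mathcal M_{n,n}(\mathbb R(t))$ is the inverse of the $n\times n$ tridiagonal matrix with all diagonal entries equal to $1$ and all entries immediately above and below the diagonal equal to $-t$ (other entries $0$); its entries are rational functions, regular at $t=0$, identified with their power series expansions in $t$. For $n\ge2$, $D_n\in\mathcal M_{n-1,n}(\mathbb R)$ is the matrix with entries $(D_n)_{r,r+1}=1$ for $1\le r\le n-1$ and all other entries $0$, and $B_n\in\mathcal M_{n-1,n}(\mathbb R)$ is the matrix with entries $(B_n)_{r,r}=(B_n)_{r,r+1}=1$ for $1\le r\le n-1$ and all other entries $0$.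 Vector and matrix rows/columns are indexed so that index $i$ (starting from $0$) corresponds to the point $(k-i,i)$. *)

(* Defs.v *)
From HB Require Import structures.
From mathcomp Require Import all_boot all_order all_algebra.
From mathcomp Require Import fraction.
From mathcomp Require Import reals.
Set Implicit Arguments. Unset Strict Implicit. Unset Printing Implicit Defensive.
Import Order.TTheory GRing.Theory Num.Theory.
Local Open Scope ring_scope.

Definition stepsB : seq (int * int) := [:: (-1, 1); (0, 1); (1, 0); (1, -1)]%R.
Definition stepsD : seq (int * int) := [:: (-1, 1); (0, 1); (1, -1)]%R.

Definition wpos (S : seq (int * int)) (n : nat) (w : {ffun 'I_n -> 'I_(size S)})
  (m : nat) : int * int :=
  ((\sum_(j < n | (j < m)%N) (nth (0, 0) S (w j)).1),
   (\sum_(j < n | (j < m)%N) (nth (0, 0) S (w j)).2)).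

(* #_S{(0,0) --n--> (x,y)}: number of n-step walks with steps in S,
   staying in N^2 (all points p_0,...,p_n), ending at (x,y). *)
Definition nwalks (S : seq (int * int)) (n x y : nat) : nat :=
  #|[set w : {ffun 'I_n -> 'I_(size S)} |
     [forall m : 'I_n.+1, (0 <= (wpos w m).1) && (0 <= (wpos w m).2)]
     && (wpos w n == (x%:Z, y%:Z))]|.

Section Mats.
Variable R : realType.

Definition Rt := {fraction {poly R}}.
Definition tfrac (p : {poly R}) : Rt := FracField.tofrac p.
Definition tt : Rt := tfrac 'X.

Definition Tmx (n : nat) : 'M[Rt]_n :=
  \matrix_(i < n, j < n)
    (if i == j :> nat then 1
     else if ((i.+1 == j) || (j.+1 == i))%N then - tt else 0).

Definition Fmx (n : nat) : 'M[Rt]_n := invmx (Tmx n).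

(* B_n, D_n for n = m+2, of size (n-1) x n, 0-indexed *)
Definition Bmx (m : nat) : 'M[Rt]_(m.+1, m.+2) :=
  \matrix_(r < m.+1, c < m.+2) (if (c == r :> nat) || (c == r.+1 :> nat) then 1 else 0).
Definition Dmx (m : nat) : 'M[Rt]_(m.+1, m.+2) :=
  \matrix_(r < m.+1, c < m.+2) (if c == r.+1 :> nat then 1 else 0).

(* Pprod X k = X_2 F_2 X_3 F_3 ... X_{k+1} F_{k+1} (empty product for k = 0) *)
Fixpoint Pprod (X : forall m, 'M[Rt]_(m.+1, m.+2)) (k : nat) : 'rV[Rt]_(k.+1) :=
  match k with
  | 0 => 1%:M
  | m.+1 => Pprod X m *m X m *m Fmx m.+2
  end.

(* r in R(t) is regular at t = 0 and its power series expansion is a *)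
Definition expands_to (r : Rt) (a : nat -> R) : Prop :=
  exists p q : {poly R}, q`_0 != 0 /\ r = tfrac p / tfrac q /\
    forall m : nat, \sum_(j < m.+1) q`_j * a (m - j)%N = p`_m.

End Mats.

(* Main.v *)
Require Import Defs.
From HB Require Import structures.
From mathcomp Require Import all_boot all_order all_algebra.
From mathcomp Require Import fraction reals.
From mathcomp Require Import zify ring lra.
Set Implicit Arguments. Unset Strict Implicit. Unset Printing Implicit Defensive.
Import Order.TTheory GRing.Theory Num.Theory.
Local Open Scope ring_scope.

Section Comb.
Variable S : seq (int * int).
Local Notation K := (size S).
Definition step (c : 'I_K) := nth (0, 0) S c.

Definition valid n (w : {ffun 'I_n -> 'I_K}) :=
  [forall m : 'I_n.+1, (0 <= (wpos w m).1) && (0 <= (wpos w m).2)].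
Definition nw n (x y : int) : nat :=
  #|[set w : {ffun 'I_n -> 'I_K} | valid w && (wpos w n == (x, y))]|.
Lemma nwalksE n x y : nwalks S n x y = nw n x%:Z y%:Z. Proof. by []. Qed.

Definition ext n (c : 'I_K) (w : {ffun 'I_n -> 'I_K}) : {ffun 'I_n.+1 -> 'I_K} :=
  [ffun j => if unlift ord_max j is Some j' then w j' else c].
Definition init n (w : {ffun 'I_n.+1 -> 'I_K}) : {ffun 'I_n -> 'I_K} :=
  [ffun i => w (widen_ord (leqnSn n) i)].

Lemma widen_lift n (i : 'I_n) : widen_ord (leqnSn n) i = lift ord_max i.
Proof. by apply: val_inj; rewrite /= /bump leqNgt ltn_ord. Qed.

Lemma init_ext n c (w : {ffun 'I_n -> 'I_K}) : init (ext c w) = w.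
Proof. by apply/ffunP => i; rewrite !ffunE widen_lift liftK. Qed.

Lemma ext_init n (w : {ffun 'I_n.+1 -> 'I_K}) : ext (w ord_max) (init w) = w.
Proof.
apply/ffunP => j; rewrite ffunE; case: unliftP => [j'|] -> //.
by rewrite ffunE widen_lift.
Qed.

Lemma sum_ext n (F : 'I_K -> int) (m : nat) c (w : {ffun 'I_n -> 'I_K}) :
  \sum_(j < n.+1 | (j < m)%N) F (ext c w j) =
  \sum_(j < n | (j < m)%N) F (w j) + (if (n < m)%N then F c else 0).
Proof.
rewrite big_mkcond big_ord_recr /= [in RHS]big_mkcond; congr (_ + _).
  by apply: eq_bigr => i _; rewrite ffunE widen_lift liftK.
by rewrite ffunE unlift_none.
Qed.

Lemma wpos_ext1 n c (w : {ffun 'I_n -> 'I_K}) m :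
  (wpos (ext c w) m).1 = (wpos w m).1 + (if (n < m)%N then (step c).1 else 0).
Proof. by rewrite /wpos /= (sum_ext (fun c => (nth (0,0) S c).1)). Qed.
Lemma wpos_ext2 n c (w : {ffun 'I_n -> 'I_K}) m :
  (wpos (ext c w) m).2 = (wpos w m).2 + (if (n < m)%N then (step c).2 else 0).
Proof. by rewrite /wpos /= (sum_ext (fun c => (nth (0,0) S c).2)). Qed.

Lemma wpos_ge n (w : {ffun 'I_n -> 'I_K}) m : (n <= m)%N -> wpos w m = wpos w n.
Proof.
move=> le; rewrite /wpos; congr (_, _); apply: eq_bigl => j;
by rewrite ltn_ord; apply: leq_trans le.
Qed.

Lemma valid_ext n c (w : {ffun 'I_n -> 'I_K}) :
  valid (ext c w) = [&& valid w, 0 <= (wpos w n).1 + (step c).1 &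
                                 0 <= (wpos w n).2 + (step c).2].
Proof.
apply/forallP/and3P.
  move=> H; split.
  - apply/forallP => m.
    have := H (widen_ord (leqnSn _) m).
    by rewrite wpos_ext1 wpos_ext2 /= ltnNge -ltnS ltn_ord /= !addr0.
  - by have := H ord_max; rewrite wpos_ext1 wpos_ext2 (wpos_ge w (leqnSn n)) /= ltnSn => /andP[].
  - by have := H ord_max; rewrite wpos_ext1 wpos_ext2 (wpos_ge w (leqnSn n)) /= ltnSn => /andP[].
move=> [/forallP V h1 h2] m; rewrite wpos_ext1 wpos_ext2.
case: (ltnP n m) => nm.
  by rewrite wpos_ge ?(ltnW nm) // h1 h2.
have mn : (m < n.+1)%N by [].
by rewrite !addr0; apply: (V (Ordinal mn)).
Qed.

Lemma nw_rec n (x y : int) :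
  nw n.+1 x y = (\sum_(c < K)
     (if ((0 <= x) && (0 <= y))%R then nw n (x - (step c).1)%R (y - (step c).2)%R else 0))%N.
Proof.
rewrite /nw -sum1_card.
rewrite (partition_big (fun w : {ffun 'I_n.+1 -> 'I_K} => w ord_max) predT) //=.
apply: eq_bigr => c _.
rewrite sum1dep_card.
case: ifP => hp; last first.
  apply/eqP; rewrite cards_eq0; apply/eqP/setP => w; rewrite !inE.
  apply/negbTE; apply/negP => /andP[/andP[/forallP V /eqP E] _].
  by have := V ord_max; rewrite E /= hp.
rewrite -(card_imset _ (can_inj (@init_ext n c))).
apply: eq_card => w; rewrite !inE.
apply/idP/idP.
  move=> /andP[/andP[V /eqP E] /eqP wc].
  have Ew : w = ext c (init w) by rewrite -wc ext_init.
  apply/imsetP; exists (init w) => //.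
  move: (init w) Ew => w' Ew.
  move: V E; rewrite inE Ew valid_ext => /and3P[-> _ _].
  rewrite [wpos (ext c w') _]surjective_pairing wpos_ext1 wpos_ext2.
  rewrite (wpos_ge w' (leqnSn n)) ltnSn => -[E1 E2].
  by rewrite -E1 -E2 !addrK /wpos eqxx.
move=> /imsetP[w' /[!inE] /andP[V /eqP E] ->].
rewrite valid_ext V ffunE unlift_none eqxx andbT /=.
move: E; rewrite [wpos w' n]surjective_pairing => -[E1 E2].
rewrite E1 E2 !subrK (andP hp).1 (andP hp).2 /=.
rewrite [wpos (ext c w') _]surjective_pairing wpos_ext1 wpos_ext2.
by rewrite (wpos_ge w' (leqnSn n)) ltnSn /wpos /= E1 E2 !subrK.
Qed.

Lemma nw0 (x y : int) : nw 0 x y = (if (((0:int), (0:int)) == (x, y)) then 1 else 0)%N.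
Proof.
have W : forall w : {ffun 'I_0 -> 'I_K}, wpos w 0 = (0, 0).
  by move=> w; rewrite /wpos !big_ord0.
have V : forall w : {ffun 'I_0 -> 'I_K}, valid w.
  by move=> w; apply/forallP => m; rewrite (wpos_ge w (leq0n m)) W /= lexx.
rewrite /nw (eq_card (B := [set w : {ffun 'I_0 -> 'I_K} | ((0:int), (0:int)) == (x, y)])); last first.
  by move=> w; rewrite !inE V W.
case: eqP => _; last by rewrite cards0.
by rewrite cardsT card_ffun (card_ord 0) expn0.
Qed.

Lemma nw_neg n (x y : int) : (x < 0) || (y < 0) -> nw n x y = 0%N.
Proof.
move=> h; apply/eqP; rewrite cards_eq0; apply/eqP/setP => w; rewrite !inE.
apply/negbTE; apply/negP => /andP[/forallP V /eqP E].
have := V ord_max; rewrite E /=.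
by move: h; case: ltrP; case: ltrP.
Qed.
End Comb.


Section T.
Variable S : seq (int * int).
Lemma T1 n x y : nw S n (x%:Z - -1) (y%:Z - 1) = if y is y'.+1 then nwalks S n x.+1 y' else 0%N.
Proof.
case: y => [|y']; first by rewrite nw_neg // sub0r orbC ltrN10.
rewrite nwalksE; congr nw; lia.
Qed.
Lemma T2 n x y : nw S n (x%:Z - 0) (y%:Z - 1) = if y is y'.+1 then nwalks S n x y' else 0%N.
Proof.
case: y => [|y']; first by rewrite nw_neg // sub0r orbC ltrN10.
rewrite nwalksE; congr nw; lia.
Qed.
Lemma T3 n x y : nw S n (x%:Z - 1) (y%:Z - 0) = if x is x'.+1 then nwalks S n x' y else 0%N.
Proof.
case: x => [|x']; first by rewrite nw_neg // sub0r ltrN10.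
rewrite nwalksE; congr nw; lia.
Qed.
Lemma T4 n x y : nw S n (x%:Z - 1) (y%:Z - -1) = if x is x'.+1 then nwalks S n x' y.+1 else 0%N.
Proof.
case: x => [|x']; first by rewrite nw_neg // sub0r ltrN10.
rewrite nwalksE; congr nw; lia.
Qed.
End T.

Lemma recB m n j : (j <= m.+1)%N ->
  nwalks stepsB n.+1 (m.+1 - j) j =
  ((if j is j'.+1 then nwalks stepsB n (m.+1 - j') j' + nwalks stepsB n (m - j') j' else 0) +
  (if (j <= m)%N then nwalks stepsB n (m - j) j + nwalks stepsB n (m.+1 - j.+1) j.+1 else 0))%N.
Proof.
move=> hj; rewrite nwalksE nw_rec !big_ord_recl big_ord0 /step /=.
rewrite T1 T2 T3 T4.
case: (leqP j m) => hjm.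
  rewrite (subSn hjm) subSS.
  case: j hj hjm => [|j'] hj hjm; first by rewrite !add0n addn0 subn0.
  have e1 : ((m - j'.+1).+1 = m - j')%N by lia.
  have e2 : ((m - j'.+1).+2 = m.+1 - j')%N by lia.
  rewrite e2 e1; lia.
have -> : j = m.+1 by apply/eqP; rewrite eqn_leq hj hjm.
rewrite subnn subSnn /= subnn; lia.
Qed.

Lemma recD m n j : (j <= m.+1)%N ->
  nwalks stepsD n.+1 (m.+1 - j) j =
  ((if j is j'.+1 then nwalks stepsD n (m.+1 - j') j' + nwalks stepsD n (m - j') j' else 0) +
  (if (j <= m)%N then nwalks stepsD n (m.+1 - j.+1) j.+1 else 0))%N.
Proof.
move=> hj; rewrite nwalksE nw_rec !big_ord_recl big_ord0 /step /=.
rewrite T1 T2 T4.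
case: (leqP j m) => hjm.
  rewrite (subSn hjm) subSS.
  case: j hj hjm => [|j'] hj hjm; first by rewrite !add0n addn0.
  have e1 : ((m - j'.+1).+1 = m - j')%N by lia.
  have e2 : ((m - j'.+1).+2 = m.+1 - j')%N by lia.
  rewrite e2 e1; lia.
have -> : j = m.+1 by apply/eqP; rewrite eqn_leq hj hjm.
rewrite subnn subSnn /= subnn; lia.
Qed.

Lemma rec0 (S : seq (int*int)) (hS : forall c : 'I_(size S), ((step c).1 > 0) || ((step c).2 > 0)) n :
  nwalks S n.+1 0 0 = 0%N.
Proof.
rewrite nwalksE nw_rec /=; apply: big1 => c _; apply: nw_neg.
by move: (hS c); rewrite !sub0r !oppr_lt0 orbC.
Qed.

Lemma nwalks0 (S : seq (int*int)) x y : nwalks S 0 x y = (if (x == 0) && (y == 0) then 1 else 0)%N.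
Proof. by rewrite nwalksE nw0 xpair_eqE; case: x => [|x]; case: y => [|y]. Qed.



Section Alg.
Variable R : realType.
Local Notation P := {poly R}.

Definition pv (F : nat -> P) (j : nat) : P := if j is j'.+1 then F j' else 0.

Definition Up n : 'M[P]_n := \matrix_(i, j) (if (i.+1 == j :> nat) || (j.+1 == i :> nat) then 1 else 0).
Definition Tp n : 'M[P]_n := \matrix_(i < n, j < n)
    (if i == j :> nat then 1 else if ((i.+1 == j) || (j.+1 == i))%N then - 'X else 0).
Definition Bp (m : nat) : 'M[P]_(m.+1, m.+2) :=
  \matrix_(r < m.+1, c < m.+2) (if (c == r :> nat) || (c == r.+1 :> nat) then 1 else 0).
Definition Dp (m : nat) : 'M[P]_(m.+1, m.+2) :=
  \matrix_(r < m.+1, c < m.+2) (if c == r.+1 :> nat then 1 else 0).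

Lemma Tp_Up n : Tp n = 1%:M - 'X *: Up n.
Proof.
apply/matrixP => i j; rewrite !mxE -val_eqE /=.
case: eqP => [->|ne].
  by rewrite (_ : (j.+1 == j)%N = false) ?mulr0 ?subr0 //; lia.
by case: ifP; rewrite ?mulr1 ?mulr0 ?subr0 ?sub0r.
Qed.

Lemma sum_pick n (F : nat -> P) c :
  \sum_(l < n) F l * (if (l == c :> nat) then 1 else 0) = if (c < n)%N then F c else 0.
Proof.
case: ltnP => h.
  rewrite (bigD1 (Ordinal h)) //= eqxx mulr1 big1 ?addr0 // => l ne.
  rewrite ifN ?mulr0 //; move: ne; apply: contra => /eqP e.
apply: big1 => l _; rewrite ifN ?mulr0 //.
by apply/negP => /eqP e; move: (ltn_ord l); rewrite e ltnNge h.
Qed.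

Lemma mulUp n (F : nat -> P) (j : 'I_n) :
  (\row_(l < n) F l *m Up n) 0 j = pv F j + (if (j.+1 < n)%N then F j.+1 else 0).
Proof.
rewrite mxE.
transitivity (\sum_(l < n) (F l * (if (l == (j : nat).-1 :> nat) && (0 < j)%N then 1 else 0)
   + F l * (if (l == j.+1 :> nat) then 1 else 0))).
  apply: eq_bigr => l _; rewrite !mxE -mulrDr; congr (_ * _).
  case: (nat_of_ord j) => [|j'] /=; rewrite ?andbF ?add0r //.
    by rewrite (eq_sym _ (nat_of_ord l)).
  rewrite andbT eqSS (eq_sym _ (nat_of_ord l)).
  case: eqP => [->|]; case: eqP => //; try lia; by rewrite ?addr0 ?add0r.
rewrite big_split /= sum_pick; congr (_ + _).
case: (nat_of_ord j) (ltn_ord j) => [|j'] /= hj.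
  by apply: big1 => l _; rewrite andbF mulr0.
rewrite (eq_bigr (fun l : 'I_n => F l * (if (l == j' :> nat) then 1 else 0))).
  by rewrite sum_pick ltnW.
by move=> l _; rewrite andbT.
Qed.

Lemma sum_pv n (F : nat -> P) (j : nat) : (j <= n)%N ->
  \sum_(l < n) F l * (if (j == l.+1 :> nat) then 1 else 0) = pv F j.
Proof.
case: j => [|j'] hj /=; first by apply: big1 => l _; rewrite mulr0.
rewrite (eq_bigr (fun l : 'I_n => F l * (if (l == j' :> nat) then 1 else 0))).
  by rewrite sum_pick hj.
by move=> l _; rewrite eqSS eq_sym.
Qed.

Lemma mulBp m (F : nat -> P) (j : 'I_m.+2) :
  (\row_(r < m.+1) F r *m Bp m) 0 j = (if (j < m.+1)%N then F j else 0) + pv F j.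
Proof.
rewrite mxE -(@sum_pick m.+1) -(@sum_pv m.+1); last by rewrite -ltnS.
rewrite -big_split /=; apply: eq_bigr => r _; rewrite !mxE -mulrDr; congr (_ * _).
rewrite (eq_sym (nat_of_ord r)).
case: eqP => [->|]; case: eqP => //; try lia; by rewrite ?addr0 ?add0r.
Qed.

Lemma mulDp m (F : nat -> P) (j : 'I_m.+2) :
  (\row_(r < m.+1) F r *m Dp m) 0 j = pv F j.
Proof.
rewrite mxE -(@sum_pv m.+1); last by rewrite -ltnS.
by apply: eq_bigr => r _; rewrite !mxE.
Qed.

Definition ptr N (f : nat -> R) : P := \poly_(n < N) f n.

Lemma ptr_ext N f g : (forall n, f n = g n) -> ptr N f = ptr N g.
Proof. by move=> h; apply/polyP => i; rewrite !coef_poly h. Qed.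

Lemma ptrS N f : ptr N.+1 f = (f 0%N)%:P + 'X * ptr N (fun n => f n.+1).
Proof.
apply/polyP => i; rewrite coefD coefC coefXM !coef_poly.
by case: i => [|i] /=; rewrite ?addr0 ?add0r.
Qed.

Lemma ptrSr N f : ptr N.+1 f = ptr N f + (f N)%:P * 'X^N.
Proof.
apply/polyP => i; rewrite coefD coefCM coefXn !coef_poly.
case: (ltngtP i N) => h; rewrite ?mulr0 ?addr0 ?mulr1 ?add0r //.
- by rewrite ltnS ltnW.
- by rewrite ltnS leqNgt h.
- by rewrite h ltnSn.
Qed.

Lemma ptrD N f g : ptr N (fun n => f n + g n) = ptr N f + ptr N g.
Proof. by apply/polyP => i; rewrite coefD !coef_poly; case: ifP; rewrite ?addr0. Qed.

Lemma ptr0 N : ptr N (fun _ => 0) = 0.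
Proof. by apply/polyP => i; rewrite coef_poly coef0; case: ifP. Qed.

Definition cnt (S : seq (int * int)) m n j : R := (nwalks S n (m - j) j)%:R.
Definition aV S m N : 'rV[P]_(m.+1) := \row_(i < m.+1) ptr N (fun n => cnt S m n i).

Lemma aV_succ S m N : aV S m N.+1 = aV S m N + 'X^N *: \row_(i < m.+1) (cnt S m N i)%:P.
Proof. by apply/matrixP => i j; rewrite !mxE ptrSr mulrC. Qed.

Lemma cnt_level0 S m j : cnt S m.+1 0 j = 0.
Proof. by rewrite /cnt nwalks0; case: j => [|j] //=; rewrite andbF. Qed.

Lemma cntB m n j : (j <= m.+1)%N -> cnt stepsB m.+1 n.+1 j =
  (if j is j'.+1 then cnt stepsB m.+1 n j' + cnt stepsB m n j' else 0) +
  (if (j <= m)%N then cnt stepsB m n j + cnt stepsB m.+1 n j.+1 else 0).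
Proof.
move=> hj; rewrite /cnt; have E := recB n hj; setoid_rewrite E; clear E.
by case: j hj => [|j] hj; case: (_ <= m)%N; rewrite /= ?add0n ?addn0 ?natrD ?add0r ?addr0.
Qed.

Lemma cntD m n j : (j <= m.+1)%N -> cnt stepsD m.+1 n.+1 j =
  (if j is j'.+1 then cnt stepsD m.+1 n j' + cnt stepsD m n j' else 0) +
  (if (j <= m)%N then cnt stepsD m.+1 n j.+1 else 0).
Proof.
move=> hj; rewrite /cnt; have E := recD n hj; setoid_rewrite E; clear E.
by case: j hj => [|j] hj; case: (_ <= m)%N; rewrite /= ?add0n ?addn0 ?natrD ?add0r ?addr0.
Qed.

Lemma V2B m N : aV stepsB m.+1 N.+1 = 'X *: (aV stepsB m.+1 N *m Up m.+2 + aV stepsB m N *m Bp m).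
Proof.
apply/matrixP => i j; rewrite ord1 [LHS]mxE ptrS cnt_level0 add0r.
rewrite [RHS]mxE [in RHS]mxE /aV.
rewrite (mulUp (fun l => ptr N (fun n => cnt stepsB m.+1 n l))).
rewrite (mulBp (fun l => ptr N (fun n => cnt stepsB m n l))); congr (_ * _).
rewrite (ptr_ext _ (fun n => cntB n (ltn_ord j : (j <= m.+1)%N))).
case: j => jj hj /=.
case: (leqP jj m) => hjm; case: jj hj hjm => [|j'] hj hjm /=;
  rewrite ?ptrD ?ptr0 ?ltnS ?hjm /=; try lia.
- ring.
- ring.
- rewrite ltnNge -ltnS hjm /=; ring.
Qed.

Lemma V2D m N : aV stepsD m.+1 N.+1 = 'X *: (aV stepsD m.+1 N *m Up m.+2 + aV stepsD m N *m Dp m).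
Proof.
apply/matrixP => i j; rewrite ord1 [LHS]mxE ptrS cnt_level0 add0r.
rewrite [RHS]mxE [in RHS]mxE /aV.
rewrite (mulUp (fun l => ptr N (fun n => cnt stepsD m.+1 n l))).
rewrite (mulDp (fun l => ptr N (fun n => cnt stepsD m n l))); congr (_ * _).
rewrite (ptr_ext _ (fun n => cntD n (ltn_ord j : (j <= m.+1)%N))).
case: j => jj hj /=.
case: (leqP jj m) => hjm; case: jj hj hjm => [|j'] hj hjm /=;
  rewrite ?ptrD ?ptr0 ?ltnS ?hjm /=; try lia.
- ring.
- ring.
- rewrite ltnNge -ltnS hjm /=; ring.
Qed.

Definition eqmv n N (u v : 'rV[P]_n) := exists r : 'rV[P]_n, u - v = 'X^N *: r.

Lemma zm (V : zmodType) (a b c d : V) : (a + b) - (a + c) - (b + d) = -(c + d).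
Proof.
by rewrite !opprD !addrA (addrAC a b) subrr add0r (addrAC b) subrr add0r.
Qed.

Lemma rec_eqmv S (Xp : forall m, 'M[P]_(m.+1, m.+2)) m
  (V2 : forall N, aV S m.+1 N.+1 = 'X *: (aV S m.+1 N *m Up m.+2 + aV S m N *m Xp m)) N :
  eqmv N (aV S m.+1 N *m Tp m.+2) ('X *: (aV S m N *m Xp m)).
Proof.
case: N => [|N].
  by eexists; rewrite expr0 scale1r.
exists (- (\row_(i < m.+2) (cnt S m.+1 N i)%:P *m Up m.+2 + \row_(i < m.+1) (cnt S m N i)%:P *m Xp m)).
rewrite Tp_Up mulmxBr mulmx1 -scalemxAr.
rewrite {1}V2 !aV_succ.
rewrite !mulmxDl -!scalemxAl !scalerDr !scalerA -!exprS.
by rewrite zm scalerN scalerDr.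
Qed.

Lemma det_Tp0 n : (\det (Tp n))`_0 = 1.
Proof.
rewrite -horner_coef0 -horner_evalE -det_map_mx.
rewrite (_ : map_mx _ _ = 1%:M) ?det1 //.
apply/matrixP => i j; rewrite !mxE -val_eqE /= horner_evalE.
case: eqP => _; rewrite ?hornerC //.
by case: ifP; rewrite ?hornerN ?hornerX ?hornerC ?oppr0.
Qed.

Lemma Tmx_map n : Tmx R n = map_mx (@tfrac R) (Tp n).
Proof.
apply/matrixP => i j; rewrite !mxE /tfrac.
case: ifP => _; first by rewrite rmorph1.
by case: ifP => _; rewrite ?rmorphN ?rmorph0.
Qed.

Lemma Bmx_map m : Bmx R m = map_mx (@tfrac R) (Bp m).
Proof. by apply/matrixP => i j; rewrite !mxE /tfrac; case: ifP; rewrite ?rmorph1 ?rmorph0. Qed.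

Lemma Dmx_map m : Dmx R m = map_mx (@tfrac R) (Dp m).
Proof. by apply/matrixP => i j; rewrite !mxE /tfrac; case: ifP; rewrite ?rmorph1 ?rmorph0. Qed.

Lemma tfracE : @tfrac R = @FracField.tofrac _.
Proof. by []. Qed.

Lemma tfrac_neq0 (q : P) : q`_0 != 0 -> tfrac q != 0.
Proof.
move=> h; rewrite /tfrac tofrac_eq0; apply: contraNneq h => ->; by rewrite coef0.
Qed.

Lemma eqmv_trans n N (u v w : 'rV[P]_n) : eqmv N u v -> eqmv N v w -> eqmv N u w.
Proof.
move=> [r1 h1] [r2 h2]; exists (r1 + r2).
by rewrite scalerDr -h1 -h2 addrA subrK.
Qed.

Lemma eqmv_mulmx n p N (u v : 'rV[P]_n) (M : 'M[P]_(n, p)) :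
  eqmv N u v -> eqmv N (u *m M) (v *m M).
Proof. by move=> [r h]; exists (r *m M); rewrite -mulmxBl h scalemxAl. Qed.

Lemma eqmv_scale n N (u v : 'rV[P]_n) c : eqmv N u v -> eqmv N (c *: u) (c *: v).
Proof. by move=> [r h]; exists (c *: r); rewrite -scalerBr h !scalerA mulrC. Qed.

Lemma eqmv_eq n N (u v : 'rV[P]_n) : u = v -> eqmv N u v.
Proof. by move=> ->; exists 0; rewrite subrr scaler0. Qed.

Section Level.
Variable S : seq (int * int).
Variable X : forall m, 'M[Rt R]_(m.+1, m.+2).
Variable Xp : forall m, 'M[P]_(m.+1, m.+2).
Hypothesis hX : forall m, X m = map_mx (@tfrac R) (Xp m).
Hypothesis hrec : forall m N, eqmv N (aV S m.+1 N *m Tp m.+2) ('X *: (aV S m N *m Xp m)).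
Hypothesis h0 : forall N, eqmv N (aV S 0 N) 1%:M.

Lemma level m : exists (q : P) (Pm : 'rV[P]_(m.+1)), q`_0 != 0 /\
  tt R ^+ m *: Pprod X m = (tfrac q)^-1 *: map_mx (@tfrac R) Pm /\
  forall N, eqmv N (q *: aV S m N) Pm.
Proof.
elim: m => [|m [q [Pm [hq [hP hE]]]]].
  exists 1, 1%:M; split; first by rewrite coef1 oner_eq0.
  split; first by rewrite /= expr0 scale1r /tfrac rmorph1 invr1 scale1r map_mx1.
  by move=> N; rewrite scale1r.
set T := Tp m.+2.
exists (q * \det T), ('X *: (Pm *m Xp m *m \adj T)); split.
  by rewrite coef0M det_Tp0 mulr1.
split.
  have dT : tfrac (\det T) != 0 by apply: tfrac_neq0; rewrite det_Tp0 oner_eq0.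
  have uT : map_mx (@tfrac R) T \in unitmx by rewrite unitmxE det_map_mx unitfE.
  rewrite /= /Fmx Tmx_map /invmx uT hX exprS -scalerA [tt R ^+ m *: _]scalemxAl [tt R ^+ m *: _]scalemxAl hP.
  rewrite tfracE map_mxZ !map_mxM ?map_mx_adj ?det_map_mx.
  rewrite -!scalemxAl -scalemxAr !scalerA.
  congr (_ *: _).
  rewrite /tt tfracE rmorphM invfM; ring.
move=> N.
have H1 := eqmv_scale q (eqmv_mulmx (\adj T) (hrec m N)).
have H2 := eqmv_scale 'X (eqmv_mulmx (\adj T) (eqmv_mulmx (Xp m) (hE N))).
apply: eqmv_trans (eqmv_trans _ H2).
  apply: eqmv_trans H1.
  apply: eqmv_eq; rewrite -mulmxA mul_mx_adj mul_mx_scalar scalerA //.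
apply: eqmv_eq.
by rewrite -!scalemxAl !scalerA mulrC.
Qed.
End Level.
End Alg.


Lemma base (R : realType) S (hS : forall c : 'I_(size S), ((step c).1 > 0) || ((step c).2 > 0)) N :
  eqmv N (aV R S 0 N) 1%:M.
Proof.
case: N => [|N].
  by exists (aV R S 0 0 - 1%:M); rewrite expr0 scale1r.
apply: eqmv_eq; apply/matrixP => i j; rewrite !ord1 !mxE ptrS.
rewrite (ptr_ext _ (fun n => (_ : cnt R S 0 n.+1 0 = 0))) ?ptr0 ?mulr0 ?addr0.
  by rewrite /cnt nwalks0.
by move=> n; rewrite /cnt rec0.
Qed.

Lemma hSB : forall c : 'I_(size stepsB), ((step c).1 > 0) || ((step c).2 > 0).
Proof. by case=> [[|[|[|[|c]]]] hc]. Qed.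
Lemma hSD : forall c : 'I_(size stepsD), ((step c).1 > 0) || ((step c).2 > 0).
Proof. by case=> [[|[|[|c]]] hc]. Qed.

Lemma final (R : realType) S (X : forall m, 'M[Rt R]_(m.+1, m.+2)) Xp
  (hX : forall m, X m = map_mx (@tfrac R) (Xp m))
  (hrec : forall m N, eqmv N (aV R S m.+1 N *m Tp R m.+2) ('X *: (aV R S m N *m Xp m)))
  (h0 : forall N, eqmv N (aV R S 0 N) 1%:M) k :
  forall i : 'I_k.+1,
     expands_to ((tt R ^+ k *: Pprod X k) 0 i)
                (fun n => (nwalks S n (k - i) i)%:R).
Proof.
have [q [Pm [hq [hP hE]]]] := level hX hrec h0 k.
move=> i; exists (Pm 0 i), q; split => //; split.
  by rewrite hP !mxE mulrC.
move=> n; have [r hr] := hE n.+1.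
have := congr1 (fun M : 'rV[{poly R}]_k.+1 => (M 0 i)`_n) hr.
rewrite /= !mxE coefB coefXnM ltnSn => /eqP; rewrite subr_eq0 => /eqP <-.
rewrite coefM; apply: eq_bigr => j _.
by rewrite coef_poly ltnS leq_subr.
Qed.

Unset Implicit Arguments.
Theorem proposition2p10 (R : realType) (k : nat) (hk : (1 <= k)%N) :
  (forall i : 'I_k.+1,
     expands_to ((tt R ^+ k *: Pprod (@Bmx R) k) 0 i)
                (fun n => (nwalks stepsB n (k - i) i)%:R))
  /\
  (forall i : 'I_k.+1,
     expands_to ((tt R ^+ k *: Pprod (@Dmx R) k) 0 i)
                (fun n => (nwalks stepsD n (k - i) i)%:R)).
Proof.
split.
  apply: (final (Xp := @Bp R)) => //.
  - exact: Bmx_map.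
  - by move=> m N; apply: rec_eqmv; apply: V2B.
  - exact: base hSB.
apply: (final (Xp := @Dp R)) => //.
- exact: Dmx_map.
- by move=> m N; apply: rec_eqmv; apply: V2D.
- exact: base hSD.
Qed.
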